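(* Let $Q$ and $H$ be countable groups and let $(S_i)_{i\in\mathbb{N}}$ with $S_i\subseteq Q$ and $(T_i)_{i\in\mathbb{N}}$ with $T_i\subseteq H$ be ascending sequences of finite sets such that $Q$ is generated by $\bigcup_i S_i$ and $H$ is generated by $\bigcup_i T_i$. Assume there is a map $r\colon H\to Q$ such that for every $i$: (1) if $d_{T_i}(x,y)<\infty$ then $d_{S_i}(r(x),r(y))<\infty$; and (2) every element of $Q$ has finite $d_{S_i}$-distance to $r(H)$. If $H$ is finitely generated, then so is $Q$.
   Context: For a subset $S$ of a group, $d_S$ denotes the word metric with respect to $S$, i.e. the path metric of the Cayley graph with respect to $S$, taking the value $\infty$ for two elements not connected by a path in that graph. *)

(* Defs.v *)
From Stdlib Require Import List.
Import ListNotations.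
Set Implicit Arguments.

Record Group := {
  carrier :> Type;
  gmul : carrier -> carrier -> carrier;
  gone : carrier;
  ginv : carrier -> carrier;
  gmulA : forall x y z, gmul x (gmul y z) = gmul (gmul x y) z;
  gmul1g : forall x, gmul gone x = x;
  gmulVg : forall x, gmul (ginv x) x = gone
}.

Definition countable_group (G : Group) : Prop :=
  exists f : G -> nat, forall x y, f x = f y -> x = y.

Definition finite_subset {G : Group} (S : G -> Prop) : Prop :=
  exists l : list G, forall x, S x <-> In x l.

(* A word: a list of letters (b, s), standing for s (b = false) or s^-1 (b = true). *)
Definition letter_in {G : Group} (S : G -> Prop) (p : bool * G) : Prop := S (snd p).

Fixpoint word_eval {G : Group} (w : list (bool * G)) : G :=
  match w with
  | [] => gone G
  | (b, s) :: w' => gmul G (if b then ginv G s else s) (word_eval w')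
  end.

(* d_S(x,y) < oo : x and y lie in the same connected component of the
   Cayley graph of G w.r.t. S (edges x -- x s, s in S), i.e. there is a
   path x, x s1^{±1}, x s1^{±1} s2^{±1}, ..., y. *)
Definition word_dist_finite {G : Group} (S : G -> Prop) (x y : G) : Prop :=
  exists w : list (bool * G),
    (forall p, In p w -> letter_in S p) /\ y = gmul G x (word_eval w).

Definition generated_by {G : Group} (S : G -> Prop) : Prop :=
  forall g : G, exists w : list (bool * G),
    (forall p, In p w -> letter_in S p) /\ g = word_eval w.

Definition finitely_generated (G : Group) : Prop :=
  exists S : G -> Prop, finite_subset S /\ generated_by S.

(* Main.v *)
Require Import Defs.
From Stdlib Require Import List Lia PeanoNat.
Import ListNotations.

Section G.
Variable G : Group.

Lemma mulgV' (x : G) : gmul G x (ginv G x) = gone G.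
Proof.
  rewrite <- (gmul1g G (gmul G x (ginv G x))).
  rewrite <- (gmulVg G (ginv G x)) at 1.
  rewrite <- gmulA. rewrite (gmulA G (ginv G x) x). rewrite gmulVg, gmul1g.
  apply gmulVg.
Qed.

Lemma mulg1' (x : G) : gmul G x (gone G) = x.
Proof. rewrite <- (gmulVg G x), gmulA, mulgV', gmul1g. reflexivity. Qed.

Lemma eval_app (w1 w2 : list (bool * G)) :
  word_eval (w1 ++ w2) = gmul G (word_eval w1) (word_eval w2).
Proof.
  induction w1 as [|[b s] w IH]; simpl.
  - rewrite gmul1g; reflexivity.
  - rewrite IH, gmulA; reflexivity.
Qed.

Lemma wd_refl (S : G -> Prop) x : word_dist_finite S x x.
Proof. exists (@nil (bool * G)). split; [intros p []|simpl; rewrite mulg1'; reflexivity]. Qed.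

Lemma wd_trans (S : G -> Prop) x y z :
  word_dist_finite S x y -> word_dist_finite S y z -> word_dist_finite S x z.
Proof.
  intros [w1 [H1 E1]] [w2 [H2 E2]]. exists (w1 ++ w2). split.
  - intros p Hp. apply in_app_or in Hp as [Hp|Hp]; auto.
  - rewrite eval_app, gmulA, <- E1; exact E2.
Qed.

Lemma wd_step (S : G -> Prop) (x : G) (b : bool) (s : G) : S s ->
  word_dist_finite S x (gmul G x (if b then ginv G s else s)).
Proof.
  intros Hs. exists [(b,s) : bool * G]. split.
  - intros p [<-|[]]; exact Hs.
  - simpl. rewrite mulg1'. reflexivity.
Qed.

Lemma wd_sym (S : G -> Prop) x y : word_dist_finite S x y -> word_dist_finite S y x.
Proof.
  intros [w [Hw E]]. revert x Hw E. induction w as [|[b s] w IH]; intros x Hw E; simpl in E.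
  - rewrite E, mulg1'. apply wd_refl.
  - assert (Hs : S s) by (apply (Hw (b,s)); left; reflexivity).
    rewrite gmulA in E.
    apply wd_trans with (gmul G x (if b then ginv G s else s)).
    + apply IH; auto. intros p Hp; apply Hw; right; exact Hp.
    + set (x' := gmul G x (if b then ginv G s else s)).
      replace x with (gmul G x' (if negb b then ginv G s else s)).
      * apply wd_step; exact Hs.
      * unfold x'; destruct b; simpl; rewrite <- gmulA;
        [rewrite gmulVg | rewrite mulgV']; apply mulg1'.
Qed.

Lemma wd_left (S : G -> Prop) g x y :
  word_dist_finite S x y -> word_dist_finite S (gmul G g x) (gmul G g y).
Proof. intros [w [Hw E]]. exists w. split; auto. rewrite E, gmulA; reflexivity. Qed.

Lemma wd_mono (S S' : G -> Prop) x y : (forall z, S z -> S' z) ->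
  word_dist_finite S x y -> word_dist_finite S' x y.
Proof. intros HS [w [Hw E]]. exists w. split; auto. intros p Hp; apply HS, Hw, Hp. Qed.

Lemma wd_one_eval (S : G -> Prop) w : (forall p, In p w -> letter_in S p) ->
  word_dist_finite S (gone G) (word_eval w).
Proof. intros Hw. exists w. split; auto. rewrite gmul1g; reflexivity. Qed.

Lemma wd_closed (S F : G -> Prop) w :
  (forall f, F f -> word_dist_finite S (gone G) f) ->
  (forall p, In p w -> letter_in F p) ->
  word_dist_finite S (gone G) (word_eval w).
Proof.
  intros HF. induction w as [|[b s] w IH]; intros Hw; simpl.
  - apply wd_refl.
  - assert (Hs : word_dist_finite S (gone G) s) by (apply HF, (Hw (b,s)); left; reflexivity).
    assert (Hs' : word_dist_finite S (gone G) (if b then ginv G s else s)).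
    { destruct b; [|exact Hs].
      apply wd_sym. pose proof (wd_left _ (ginv G s) _ _ Hs) as K.
      rewrite mulg1', gmulVg in K. exact K. }
    apply wd_trans with (if b then ginv G s else s); [exact Hs'|].
    rewrite <- (mulg1' (if b then ginv G s else s)) at 1.
    apply wd_left, IH. intros p Hp; apply Hw; right; exact Hp.
Qed.
End G.

Theorem lemma5p6 (Q H : Group)
  (S : nat -> Q -> Prop) (T : nat -> H -> Prop) (r : H -> Q)
  (hQc : countable_group Q) (hHc : countable_group H)
  (hSfin : forall i, finite_subset (S i)) (hTfin : forall i, finite_subset (T i))
  (hSasc : forall i x, S i x -> S (i + 1) x)
  (hTasc : forall i x, T i x -> T (i + 1) x)
  (hSgen : generated_by (fun q : Q => exists i, S i q))
  (hTgen : generated_by (fun h : H => exists i, T i h))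
  (hr1 : forall i (x y : H), word_dist_finite (T i) x y ->
           word_dist_finite (S i) (r x) (r y))
  (hr2 : forall i (q : Q), exists h : H, word_dist_finite (S i) q (r h))
  (hHfg : finitely_generated H) :
  finitely_generated Q.
Proof.
  assert (Tmono : forall j k x, j <= k -> T j x -> T k x).
  { intros j k x Hjk. induction Hjk; auto. intros; rewrite <- Nat.add_1_r; auto. }
  assert (Wi : forall w : list (bool * H), (forall p, In p w -> letter_in (fun h => exists i, T i h) p) ->
            exists i, forall p, In p w -> letter_in (T i) p).
  { induction w as [|p w IH]; intros Hw.
    - exists 0; intros p [].
    - destruct IH as [i Hi]. { intros q Hq; apply Hw; right; exact Hq. }
      destruct (Hw p (or_introl eq_refl)) as [j Hj].
      exists (Nat.max i j). intros q [<-|Hq]; unfold letter_in.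
      + apply Tmono with j; [lia|exact Hj].
      + apply Tmono with i; [lia|apply Hi, Hq]. }
  destruct hHfg as [F [[l Hl] HF]].
  assert (Li : exists i, forall f, In f l -> word_dist_finite (T i) (gone H) f).
  { clear Hl HF. induction l as [|f l IH].
    - exists 0; intros f [].
    - destruct IH as [i Hi].
      destruct (hTgen f) as [w [Hw Ef]]. destruct (Wi w Hw) as [j Hj].
      exists (Nat.max i j). intros g [<-|Hg].
      + rewrite Ef. apply wd_mono with (T j). { intros z; apply Tmono; lia. }
        apply wd_one_eval; exact Hj.
      + apply wd_mono with (T i). { intros z; apply Tmono; lia. } apply Hi, Hg. }
  destruct Li as [i Hi].
  assert (Hall : forall h, word_dist_finite (T i) (gone H) h).
  { intros h. destruct (HF h) as [w [Hw ->]]. apply wd_closed with F; auto.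
    intros f Hf; apply Hi, Hl, Hf. }
  exists (S i). split; [apply hSfin|].
  intros q.
  destruct (hr2 i q) as [h Hh]. destruct (hr2 i (gone Q)) as [h0 Hh0].
  assert (K : word_dist_finite (S i) (gone Q) q).
  { apply wd_trans with (r h0); [exact Hh0|].
    apply wd_trans with (r (gone H)).
    { apply hr1, wd_sym, Hall. }
    apply wd_trans with (r h); [apply hr1, Hall|]. apply wd_sym, Hh. }
  destruct K as [w [Hw E]]. exists w. split; auto. rewrite E, gmul1g; reflexivity.
Qed.
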